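(* For every integer $n\ge2$, $R^p(n)\le \frac1n\cot\!\left(\frac{\pi}{2n}\right)$ (which is $<\tfrac{2}{\pi}$).
   Context: A qubit POVM is a finite family $\{\Pi_i\}_{i=1}^n$ of positive semidefinite operators summing to $\mathbb{I}$; it simulates $\{M_{a|x}\}$ if $M_{a|x}=\sum_i p(a|x,i)\Pi_i$ with $p(a|x,i)\ge0$, $\sum_a p(a|x,i)=1$. $\mathcal{P}^p_r$ is the family of two-outcome POVMs $\{\tfrac12(\mathbb{I}\pm r\hat n\cdot\vec\sigma)\}$ over all unit vectors $\hat n=(n_x,0,n_z)$. $R^p(n)$ is the supremum of $r$ such that some $n$-outcome qubit POVM simulates $\mathcal{P}^p_r$. *)

(* Defs.v *)
From HB Require Import structures.
From mathcomp Require Import all_boot all_order all_algebra.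
From mathcomp Require Import complex.
From mathcomp Require Import all_classical all_reals all_analysis.

Set Implicit Arguments.
Unset Strict Implicit.
Unset Printing Implicit Defensive.

Import Order.TTheory GRing.Theory Num.Theory.
Local Open Scope ring_scope.
Local Open Scope complex_scope.

Section Qubit.
Variable R : realType.

Definition qop := 'M[R[i]]_2.

(* Positive semidefinite: <v, A v> >= 0 for all v in C^2
   (0 <= z in R[i] means z is real and nonnegative). *)
Definition psd (A : qop) : Prop :=
  forall v : 'cV[R[i]]_2, 0 <= ((map_mx conjc v)^T *m A *m v) 0 0.

Definition povm (n : nat) (Pi : 'I_n -> qop) : Prop :=
  (forall i, psd (Pi i)) /\ \sum_(i < n) Pi i = 1%:M.

Definition sigma_x : qop := \matrix_(i < 2, j < 2) (if i == j then 0 else 1).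
Definition sigma_z : qop :=
  \matrix_(i < 2, j < 2) (if i == j then (if i == 0 :> 'I_2 then 1 else -1) else 0).

(* The element of P^p_r for the unit vector (nx, 0, nz), outcome a (true = +, false = -):
   1/2 (I +- r (nx sigma_x + nz sigma_z)). *)
Definition Pmeas (r nx nz : R) (a : bool) : qop :=
  (1 / 2)%:C *: (1%:M + ((if a then 1 else -1) * r)%:C *:
                          (nx%:C *: sigma_x + nz%:C *: sigma_z)).

Definition simulates_Pp (n : nat) (r : R) : Prop :=
  exists Pi : 'I_n -> qop, povm Pi /\
    forall nx nz : R, nx ^+ 2 + nz ^+ 2 = 1 ->
      exists p : bool -> 'I_n -> R,
        (forall a i, 0 <= p a i) /\
        (forall i, p true i + p false i = 1) /\
        (forall a, Pmeas r nx nz a = \sum_(i < n) (p a i)%:C *: Pi i).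

Definition Rp (n : nat) : \bar R :=
  ereal_sup [set (r%:E)%E | r in [set r | simulates_Pp n r]].

End Qubit.

(* Main.v *)
Require Import Defs.
From HB Require Import structures.
From mathcomp Require Import all_boot all_order all_algebra.
From mathcomp Require Import complex.
From mathcomp Require Import all_classical all_reals all_analysis.
From mathcomp Require Import ring lra zify.

Import Order.TTheory GRing.Theory Num.Theory.
Import numFieldNormedType.Exports.
Local Open Scope ring_scope.

Section Analytic.
Variable R : realType.
Local Open Scope classical_set_scope.

Lemma cont_of_deriv (f df : R -> R) (a b : R) :
  (forall x : R, is_derive x (1:R) f (df x)) -> {within `[a, b]%classic, continuous f}.
Proof.
move=> H; apply: continuous_subspaceT => x.
have := H x => -[dx _]. exact/differentiable_continuous/derivable1_diffP.
Qed.
Lemma sin_le_id (e : R) : 0 <= e -> sin e <= e.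
Proof.
move=> e0; case: (ltrP 0 e) => [ep|e0'].
  have hd x : is_derive x (1:R) (fun y : R => y - sin y) (1 - cos x).
    by apply: is_deriveB.
  have [c _ hc] := MVT ep (fun x _ => hd x) (cont_of_deriv _ _ _ _ hd).
  move: hc; rewrite sin0 !subr0 => hc.
  rewrite -subr_ge0 hc mulr_ge0 // ?subr_ge0 ?cos_le1 //; exact: ltW.
have -> : e = 0 by apply/le_anti; rewrite e0' e0.
by rewrite sin0.
Qed.
Lemma tan_gt_id (d : R) : 0 < d < pi / 2 -> d * cos d < sin d.
Proof.
case/andP=> d0 dpi.
have hd x : is_derive x (1:R) (fun y : R => sin y - y * cos y) (x * sin x).
  have h1 : is_derive x (1:R) ((sin : R -> R) - (id : R -> R) * (cos : R -> R))
     (cos x - (x *: - sin x + cos x *: 1)) by apply: is_deriveB.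
  apply: is_derive_eq h1 _.
  rewrite /GRing.scale /=; lra.
have [c /andP[c0 cd] hc] := MVT d0 (fun x _ => hd x) (cont_of_deriv _ _ _ _ hd).
move: c0 cd hc; rewrite !bnd_simp sin0 !mul0r !subr0 => c0 cd hc.
rewrite -subr_gt0 hc !mulr_gt0 //; apply: sin_gt0_pihalf.
by rewrite c0 /= (lt_trans cd).
Qed.
Lemma tan_ge_id (d : R) : 0 <= d < pi / 2 -> d * cos d <= sin d.
Proof.
case/andP=> d0; case: (ltrP 0 d) => [dp dpi|d0' _].
  by apply: ltW; apply: tan_gt_id; rewrite dp.
have -> : d = 0 by apply/le_anti; rewrite d0' d0.
by rewrite sin0 mul0r.
Qed.

Lemma key_tangent (a x : R) : 0 < a < pi / 2 -> 0 <= x < pi / 2 ->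
  (x - a) * cos x <= cos a * sin (x - a).
Proof.
move=> /andP[a0 api] /andP[x0 xpi].
have pi0 := pi_gt0 R.
case: (lerP 0 (x - a)) => [dge|dlt].
  have hd := tan_ge_id (x - a); have : 0 <= x - a < pi / 2.
    rewrite dge /=; lra.
  move=> /hd {}hd.
  have ca : 0 <= cos a by apply: cos_ge0_pihalf; apply/andP; split; lra.
  have sa : 0 <= sin a by apply: sin_ge0_pi; apply/andP; split; lra.
  have sd : 0 <= sin (x - a) by apply: sin_ge0_pi; apply/andP; split; lra.
  have -> : cos x = cos a * cos (x - a) - sin a * sin (x - a).
    by rewrite -cosD addrC subrK.
  have h1 : 0 <= cos a * (sin (x - a) - (x - a) * cos (x - a)).
    by apply: mulr_ge0 => //; rewrite subr_ge0.
  have h2 : 0 <= (x - a) * sin a * sin (x - a) by rewrite !mulr_ge0.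
  nra.
set e := a - x.
have e0 : 0 <= e by rewrite /e; lra.
have -> : x - a = - e by rewrite /e opprB.
rewrite sinN.
have se := sin_le_id e e0.
have se0 : 0 <= sin e by apply: sin_ge0_pi; apply/andP; split; rewrite /e; lra.
have cx : 0 <= cos x by apply: cos_ge0_pihalf; apply/andP; split; lra.
have sx : 0 <= sin x by apply: sin_ge0_pi; apply/andP; split; lra.
have ce := cos_le1 e.
have -> : cos a = cos x * cos e - sin x * sin e.
  by rewrite -cosD /e addrC subrK.
have h1 : 0 <= cos x * (e - cos e * sin e).
  apply: mulr_ge0 => //; rewrite subr_ge0; apply: le_trans se.
  by rewrite ler_piMl.
have h2 : 0 <= sin x * sin e * sin e by rewrite !mulr_ge0.
nra.
Qed.

Lemma tangent_line (a x : R) : 0 < a < pi / 2 -> 0 <= x < pi / 2 ->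
  sin a / cos a + (x - a) / cos a ^+ 2 <= sin x / cos x.
Proof.
move=> ha hx; have K := key_tangent _ _ ha hx.
move: ha hx => /andP[a0 api] /andP[x0 xpi].
have pi0 := pi_gt0 R.
have ca : 0 < cos a by apply: cos_gt0_pihalf; apply/andP; split; lra.
have cx : 0 < cos x by apply: cos_gt0_pihalf; apply/andP; split; lra.
rewrite sinB in K.
rewrite -subr_ge0.
have -> : sin x / cos x - (sin a / cos a + (x - a) / cos a ^+ 2) =
   (cos a * (sin x * cos a - cos x * sin a) - (x - a) * cos x) / (cos x * cos a ^+ 2).
  by field; apply/andP; split; rewrite gt_eqF.
apply: divr_ge0; first lra.
by apply: mulr_ge0; [apply: ltW|apply: sqr_ge0].
Qed.
Lemma sum_sin_tan (u v h : R) : h = (v - u) / 2 -> cos h != 0 ->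
  (sin u + sin v) * (sin h / cos h) = cos u - cos v.
Proof.
move=> eh ch; set m := (u + v) / 2.
have su : sin u = sin m * cos h - cos m * sin h.
  by rewrite -sinB; congr sin; rewrite /m eh; field.
have sv : sin v = sin m * cos h + cos m * sin h.
  by rewrite -sinD; congr sin; rewrite /m eh; field.
have cu : cos u = cos m * cos h + sin m * sin h.
  by rewrite -cosB; congr cos; rewrite /m eh; field.
have cv : cos v = cos m * cos h - sin m * sin h.
  by rewrite -cosD; congr cos; rewrite /m eh; field.
rewrite su sv cu cv; field; exact: ch.
Qed.

Lemma sin_le0 (y : R) : - pi <= y <= 0 -> sin y <= 0.
Proof.
move=> /andP[h1 h2]; rewrite -(opprK y) sinN oppr_le0; apply: sin_ge0_pi.
apply/andP; split; lra.
Qed.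

Lemma sum_gt0 (n j0 : nat) (F : nat -> R) : (forall j, (j < n)%N -> 0 <= F j) ->
  (j0 < n)%N -> 0 < F j0 -> 0 < \sum_(0 <= j < n) F j.
Proof.
move=> hF hj0 hp; rewrite big_mkord (bigD1 (Ordinal hj0)) //=.
have : 0 <= \sum_(i < n | i != Ordinal hj0) F i by apply: sumr_ge0 => i _; apply: hF.
lra.
Qed.

Lemma sum_pos_ex (n : nat) (F : nat -> R) : 0 < \sum_(0 <= j < n) F j ->
  exists2 j, (j < n)%N & 0 < F j.
Proof.
move=> hs; apply: contrapT => hne.
have : \sum_(0 <= j < n) F j <= \sum_(0 <= j < n) (0 : R).
  rewrite big_nat_cond [X in _ <= X]big_nat_cond; apply: ler_sum => j /andP[/andP[_ hj] _].
  by rewrite leNgt; apply/negP => hp; apply: hne; exists j.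
have -> : \sum_(0 <= j < n) (0 : R) = 0 by rewrite big1.
lra.
Qed.
Definition cn (n : nat) : R :=
  (n%:R)^-1 * (cos (pi / (2 * n%:R)) / sin (pi / (2 * n%:R))).

Lemma cn_facts (n : nat) : (2 <= n)%N ->
  let a := pi / (2 * n%:R) in
  [/\ 0 < a, a < pi / 2, 0 < cos a, 0 < sin a &
      cn n * (n%:R * (sin a / cos a)) = 1].
Proof.
move=> n2 a.
have hn : (2 : R) <= n%:R by rewrite (ler_nat R 2 n).
have pi0 := pi_gt0 R.
have an : a * (2 * n%:R) = pi by rewrite /a divfK // gt_eqF //; lra.
have a0 : 0 < a by nra.
have api : a < pi / 2 by nra.
have ca : 0 < cos a by apply: cos_gt0_pihalf; apply/andP; split; lra.
have sa : 0 < sin a by apply: sin_gt0_pihalf; apply/andP; split; lra.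
split => //; rewrite /cn -/a; field.
by rewrite !gt_eqF //; lra.
Qed.

Lemma cn_ge0 (n : nat) : (2 <= n)%N -> 0 <= cn n.
Proof.
move=> /cn_facts [a0 api ca sa _]; rewrite /cn.
apply: mulr_ge0; first by rewrite invr_ge0.
by apply: divr_ge0; apply: ltW.
Qed.
Lemma core (n : nat) (Phi W : nat -> R) : (2 <= n)%N ->
  (forall k, (k < n)%N -> 0 <= Phi k < pi) ->
  (forall k, (k < n)%N -> 0 <= W k) ->
  (forall i j, (i <= j)%N -> (j < n)%N -> Phi i <= Phi j) ->
  exists2 j, (j < n)%N &
    \sum_(0 <= i < n) W i * `|sin (Phi i - Phi j)| <= cn n * \sum_(0 <= i < n) W i.
Proof.
move=> n2 hP hW hmono.
have n0 : (0 < n)%N by lia.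
have pi0 := pi_gt0 R.
have cn0 := cn_ge0 n n2.
have Wsum0 : 0 <= \sum_(0 <= i < n) W i.
  by rewrite big_nat_cond; apply: sumr_ge0 => i /andP[/andP[_ hi] _]; apply: hW.
case: (lerP (Phi n.-1) (Phi 0)) => [heq|hlt].
  exists 0%N => //.
  rewrite [X in X <= _]big_nat_cond big1; first exact: mulr_ge0.

  move=> i /andP[/andP[_ hi] _].
  have -> : Phi i = Phi 0.
    apply/le_anti; apply/andP; split; last by apply: hmono; lia.
    by apply: le_trans heq; apply: hmono; lia.
  by rewrite subrr sin0 normr0 mulr0.
have [a0 api ca sa cntan] := cn_facts n n2.
set a := pi / (2 * n%:R) in a0 api ca sa cntan.
pose Psi k := if (k < n)%N then Phi k else Phi 0 + pi.
pose g j := Psi j.+1 - Psi j.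
pose t j := sin (g j / 2) / cos (g j / 2).
have Psi0 : Psi 0%N = Phi 0 by rewrite /Psi n0.
have Psin : Psi n = Phi 0 + pi by rewrite /Psi ltnn.
have hg j : (j < n)%N -> 0 <= g j < pi.
  move=> hj; rewrite /g /Psi hj; case: (ltnP j.+1 n) => hj1.
    have := hP _ hj1; have := hP _ hj; have := hmono j j.+1 (leqnSn j) hj1.
    move=> *; apply/andP; split; lra.
  have ej : j = n.-1 by lia.
  have := hP _ hj; have := hP 0%N n0; rewrite -ej in hlt.
  move=> *; apply/andP; split; lra.
have hcg j : (j < n)%N -> 0 < cos (g j / 2).
  move=> /hg /andP[h1 h2]; apply: cos_gt0_pihalf; apply/andP; split; lra.
have ht0 j : (j < n)%N -> 0 <= t j.
  move=> hj; have /andP[h1 h2] := hg j hj; apply: divr_ge0; last exact/ltW/hcg.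
  by apply: sin_ge0_pi; apply/andP; split; lra.
have gsum : \sum_(0 <= j < n) g j = pi.
  by rewrite telescope_sumr // Psin Psi0; lra.
have tsum : n%:R * (sin a / cos a) <= \sum_(0 <= j < n) t j.
  have -> : n%:R * (sin a / cos a) =
      \sum_(0 <= j < n) (sin a / cos a + (g j / 2 - a) / cos a ^+ 2).
    rewrite big_split /= sumr_const_nat subn0 -mulr_suml sumrB -mulr_suml gsum.
    rewrite sumr_const_nat subn0 -(mulr_natr (sin a / cos a)) -(mulr_natr a).
    have -> : a * n%:R = pi / 2.
      have nz : n%:R != 0 :> R by rewrite pnatr_eq0 -lt0n.
      rewrite /a; field; exact: nz.
    by rewrite subrr mul0r addr0 mulrC.
  rewrite big_nat_cond [X in _ <= X]big_nat_cond.
  apply: ler_sum => j /andP[/andP[_ hj] _].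
  have /andP[h1 h2] := hg j hj.
  apply: tangent_line; apply/andP; split; lra.
have per_i i : (i < n)%N -> \sum_(0 <= j < n)
    (`|sin (Psi j - Phi i)| + `|sin (Psi j.+1 - Phi i)|) * t j = 2.
  move=> hi.
  pose T k := if (k <= i)%N then cos (Psi k - Phi i) else 2 - cos (Psi k - Phi i).
  rewrite (@telescope_sumr_eq _ _ _ T) //; last first.
    move=> k /andP[_ hk].
    have hid : (sin (Psi k - Phi i) + sin (Psi k.+1 - Phi i)) * t k =
        cos (Psi k - Phi i) - cos (Psi k.+1 - Phi i).
      apply: sum_sin_tan; first by rewrite /g; field.
      by apply: lt0r_neq0; apply: hcg.
    have Pk : Psi k = Phi k by rewrite /Psi hk.
    have [hik|hki] := leqP i k.
      have s1 : 0 <= sin (Psi k - Phi i).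
        rewrite Pk; apply: sin_ge0_pi; have := hmono _ _ hik hk.
        have := hP _ hk; have := hP _ hi; move=> *; apply/andP; split; lra.
      have s2 : 0 <= sin (Psi k.+1 - Phi i).
        apply: sin_ge0_pi; rewrite /Psi; case: (ltnP k.+1 n) => hk1.
          have := hmono i k.+1 (leqW hik) hk1.
          have := hP _ hk1; have := hP _ hi; move=> *; apply/andP; split; lra.
        have := hmono 0%N i (leq0n _) hi.
        have := hP _ n0; have := hP _ hi; move=> *; apply/andP; split; lra.
      rewrite !ger0_norm // /T.
      have -> : (k.+1 <= i)%N = false by apply/negbTE; rewrite -ltnNge ltnS.
      have -> : (if (k <= i)%N then cos (Psi k - Phi i) else 2 - cos (Psi k - Phi i))
                = 2 - cos (Psi k - Phi i).
        case: ifP => // hki; have eki : k = i by apply/eqP; rewrite eqn_leq hki hik.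
        by rewrite Pk eki subrr cos0; lra.
      rewrite hid; lra.
    have hk1 : (k.+1 < n)%N by lia.
    have Pk1 : Psi k.+1 = Phi k.+1 by rewrite /Psi hk1.
    have s1 : sin (Psi k - Phi i) <= 0.
      rewrite Pk; apply: sin_le0; have := hmono _ _ (ltnW hki) hi.
      have := hP _ hk; have := hP _ hi; move=> *; apply/andP; split; lra.
    have s2 : sin (Psi k.+1 - Phi i) <= 0.
      rewrite Pk1; apply: sin_le0; have := hmono _ _ hki hi.
      have := hP _ hk1; have := hP _ hi; move=> *; apply/andP; split; lra.
    rewrite !ler0_norm // /T hki (ltnW hki) -opprD mulNr hid; lra.
  rewrite /T (leqNgt n i) hi /= Psin Psi0.
  have -> : Phi 0 + pi - Phi i = (Phi 0 - Phi i) + pi by rewrite addrAC.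
  rewrite cosDpi; lra.
pose H j := \sum_(0 <= i < n) W i * `|sin (Phi i - Phi j)|.
pose A k := \sum_(0 <= i < n) W i * `|sin (Psi k - Phi i)|.
pose Ws := \sum_(0 <= i < n) W i.
have main : Ws * 2 = \sum_(0 <= j < n) (A j + A j.+1) * t j.
  rewrite /Ws mulr_suml.
  transitivity (\sum_(0 <= i < n) \sum_(0 <= j < n)
     W i * ((`|sin (Psi j - Phi i)| + `|sin (Psi j.+1 - Phi i)|) * t j)).
    rewrite big_nat_cond [RHS]big_nat_cond; apply: eq_bigr => i /andP[/andP[_ hi] _].
    by rewrite -mulr_sumr per_i.
  rewrite exchange_big_nat; apply: eq_bigr => j _.
  by rewrite /A -big_split /= mulr_suml; apply: eq_bigr => i _; ring.
have AH k : (k < n)%N -> A k = H k.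
  move=> hk; rewrite /A /H /Psi hk; apply: eq_bigr => i _.
  by rewrite -normrN -sinN opprB.
have An : A n = H 0%N.
  rewrite /A /H Psin; apply: eq_bigr => i _.
  by rewrite addrAC (sinDpi (Phi 0 - Phi i)) normrN -normrN -sinN opprB.
apply: contrapT => hne.
have hall j : (j < n)%N -> cn n * Ws < H j.
  move=> hj; rewrite ltNge; apply/negP => hle; apply: hne; by exists j.
have hA k : (k <= n)%N -> cn n * Ws < A k.
  move=> hk; case: (ltnP k n) => hk'; first by rewrite AH // hall.
  have -> : k = n by apply/eqP; rewrite eqn_leq hk hk'.
  by rewrite An hall.
have [j0 hj0 tj0] : exists2 j, (j < n)%N & 0 < t j.
  apply: sum_pos_ex; apply: lt_le_trans tsum; apply: mulr_gt0.
    by rewrite ltr0n.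
  by apply: divr_gt0.
have strict : 0 < \sum_(0 <= j < n) (A j + A j.+1 - 2 * (cn n * Ws)) * t j.
  apply: (sum_gt0 _ j0) => //.
    move=> j hj; apply: mulr_ge0; last exact: ht0.
    have := hA j (ltnW hj); have := hA j.+1 hj; lra.
  apply: mulr_gt0 => //; have := hA j0 (ltnW hj0); have := hA j0.+1 hj0; lra.
have e1 : \sum_(0 <= j < n) (A j + A j.+1 - 2 * (cn n * Ws)) * t j =
   Ws * 2 - 2 * (cn n * Ws) * \sum_(0 <= j < n) t j.
  rewrite main mulr_sumr -sumrB; apply: eq_bigr => j _; ring.
have e2 : 2 * (cn n * Ws) * (n%:R * (sin a / cos a)) <=
          2 * (cn n * Ws) * \sum_(0 <= j < n) t j.
  by apply: ler_wpM2l => //; apply: mulr_ge0 => //; apply: mulr_ge0.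
have e3 : 2 * (cn n * Ws) * (n%:R * (sin a / cos a)) = 2 * Ws.
  have -> : 2 * (cn n * Ws) * (n%:R * (sin a / cos a)) =
            2 * Ws * (cn n * (n%:R * (sin a / cos a))) by ring.
  by rewrite cntan mulr1.
lra.
Qed.


Lemma polar_half (x z : R) : 0 <= z -> (z = 0 -> 0 <= x) ->
  exists2 phi : R, 0 <= phi < pi & forall nx nz : R,
    `|nx * x + nz * z| = Num.sqrt (x ^+ 2 + z ^+ 2) * `|nx * cos phi + nz * sin phi|.
Proof.
move=> z0 hx; set w := Num.sqrt (x ^+ 2 + z ^+ 2).
have w0 : 0 <= w by apply: sqrtr_ge0.
have ww : w ^+ 2 = x ^+ 2 + z ^+ 2 by rewrite sqr_sqrtr // addr_ge0 // sqr_ge0.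
case: (lerP w 0) => [wle|wpos].
  have we : w = 0 by apply/le_anti; rewrite wle w0.
  have x0 : x = 0 by move: ww; rewrite we expr0n /=; nra.
  have zz : z = 0 by move: ww; rewrite we expr0n /=; nra.
  exists 0; first by rewrite lexx pi_gt0.
  by move=> nx nz; rewrite x0 zz we !mulr0 addr0 normr0 mul0r.
have hxw : -1 <= x / w <= 1.
  have : (x / w) ^+ 2 <= 1.
    rewrite expr_div_n ler_pdivrMr ?exprn_gt0 // mul1r ww; nra.
  move=> h; apply/andP; split; nra.
exists (acos (x / w)).
  rewrite acos_ge0 //=; apply: acos_ltpi.
  case/andP: hxw => h1 h2; rewrite h2 andbT lt_neqAle h1 andbT.
  apply/eqP => he.
  have xe : x = - w by move: he; move/(congr1 (fun y => y * w)); rewrite divfK ?gt_eqF //; lra.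
  have zz : z = 0 by move: ww; rewrite xe; nra.
  by have := hx zz; lra.
move=> nx nz.
have c : cos (acos (x / w)) = x / w by rewrite acosK // in_itv /=.
have s : sin (acos (x / w)) = z / w.
  rewrite sin_acos //.
  have -> : 1 - (x / w) ^+ 2 = (z / w) ^+ 2.
    rewrite !expr_div_n ww; field.
    by rewrite -ww gt_eqF // exprn_gt0.
  by rewrite sqrtr_sqr ger0_norm // divr_ge0 // ltW.
rewrite c s -{1}(ger0_norm w0) -normrM.
have -> : w * (nx * (x / w) + nz * (z / w)) = nx * x + nz * z.
  by field; rewrite gt_eqF.
by [].
Qed.

Lemma polar (x z : R) : exists2 phi : R, 0 <= phi < pi & forall nx nz : R,
    `|nx * x + nz * z| = Num.sqrt (x ^+ 2 + z ^+ 2) * `|nx * cos phi + nz * sin phi|.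
Proof.
case: (boolP ((0 < z) || ((z == 0) && (0 <= x)))) => hc.
  apply: polar_half.
    by case/orP: hc => [/ltW //|/andP[/eqP -> _]].
  move=> zz; case/orP: hc => [|/andP[_ //]]; by rewrite zz ltxx.
have [phi hphi H] : exists2 phi : R, 0 <= phi < pi & forall nx nz : R,
    `|nx * (- x) + nz * (- z)| = Num.sqrt ((- x) ^+ 2 + (- z) ^+ 2) *
       `|nx * cos phi + nz * sin phi|.
  apply: polar_half.
    rewrite oppr_ge0; move: hc; rewrite negb_or => /andP[h _]; by rewrite leNgt.
  move=> /eqP; rewrite oppr_eq0 => /eqP zz; move: hc; rewrite zz ltxx eqxx /=.
  by rewrite -ltNge oppr_ge0 => /ltW.
exists phi => // nx nz; have := H nx nz; rewrite !sqrrN => <-.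
rewrite -normrN; congr (Num.norm _); ring.
Qed.


Lemma geo (n : nat) (x z : 'I_n -> R) : (2 <= n)%N ->
  exists nx nz : R, nx ^+ 2 + nz ^+ 2 = 1 /\
    \sum_(i < n) `|nx * x i + nz * z i| <=
      cn n * \sum_(i < n) Num.sqrt (x i ^+ 2 + z i ^+ 2).
Proof.
move=> n2.
have hex i : exists phi : R, (0 <= phi < pi) /\ forall nx nz : R,
    `|nx * x i + nz * z i| = Num.sqrt (x i ^+ 2 + z i ^+ 2) *
       `|nx * cos phi + nz * sin phi|.
  by have [p h1 h2] := polar (x i) (z i); exists p.
have [phi hphi] := choice hex.
pose w i := Num.sqrt (x i ^+ 2 + z i ^+ 2).
pose le2 := fun p q : R * R => p.1 <= q.1.
pose L := sort le2 [seq (phi i, w i) | i <- enum 'I_n].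
have sL : size L = n by rewrite size_sort size_map size_enum_ord.
have memL p : p \in L -> (0 <= p.1 < pi) /\ 0 <= p.2.
  rewrite mem_sort => /mapP[i _ ->] /=; split; [exact: (hphi i).1 | exact: sqrtr_ge0].
pose Phi k := (nth (0,0) L k).1.
pose W k := (nth (0,0) L k).2.
have hnth k : (k < n)%N -> nth (0,0) L k \in L by move=> hk; apply: mem_nth; rewrite sL.
have sorted_L : sorted le2 L.
  by apply: sort_sorted => p q; exact: le_total.
have hmono i j : (i <= j)%N -> (j < n)%N -> Phi i <= Phi j.
  move=> hij hj; apply: (sorted_leq_nth _ _ (0,0) sorted_L) => //.
  - by move=> p q r; rewrite /le2; apply: le_trans.
  - by move=> p; rewrite /le2.
  - by rewrite inE sL; lia.
  - by rewrite inE sL.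
have hP k : (k < n)%N -> 0 <= Phi k < pi by move=> /hnth /memL [].
have hW k : (k < n)%N -> 0 <= W k by move=> /hnth /memL [].
have [j hj hle] := core n Phi W n2 hP hW hmono.
exists (- sin (Phi j)), (cos (Phi j)); split.
  by rewrite sqrrN addrC cos2Dsin2.
have eqS (G : R * R -> R) :
    \sum_(i < n) G (phi i, w i) = \sum_(0 <= k < n) G (nth (0,0) L k).
  transitivity (\sum_(p <- L) G p).
    rewrite (perm_big [seq (phi i, w i) | i <- enum 'I_n]); last by rewrite perm_sort.
    by rewrite big_map big_enum.
  by rewrite (big_nth (0,0)) sL.
have -> : \sum_(i < n) Num.sqrt (x i ^+ 2 + z i ^+ 2) = \sum_(0 <= k < n) W k.
  exact: (eqS snd).
apply: le_trans hle; rewrite le_eqVlt; apply/orP; left; apply/eqP.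
have := eqS (fun p => p.2 * `|sin (p.1 - Phi j)|) => /= <-.
apply: eq_bigr => i _; rewrite (hphi i).2; congr (_ * _).
by rewrite sinB; congr (Num.norm _); ring.
Qed.
End Analytic.

Section Quantum.
Variable R : realType.
Local Open Scope complex_scope.
Local Notation ReC := (@complex.Re R).


Lemma ReCM (c : R) (m : R[i]) : ReC (c%:C * m) = c * ReC m.
Proof. by case: m => a b /=; simpc. Qed.

Lemma sgE (b : bool) : (if b then 1 else -1 : R) ^+ 2 = 1.
Proof. by case: b; rewrite ?sqrrN expr1n. Qed.

Lemma e01 : (0 == 1 :> 'I_2) = false. Proof. by []. Qed.
Lemma e10 : (1 == 0 :> 'I_2) = false. Proof. by []. Qed.

Lemma Pmeas00 (r nx nz : R) (b : bool) :
  ReC (Pmeas r nx nz b 0 0) = (1 + (if b then 1 else -1) * r * nz) / 2.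
Proof. rewrite /Pmeas /sigma_x /sigma_z !mxE !eqxx; simpc; by rewrite /= mulrC. Qed.

Lemma Pmeas11 (r nx nz : R) (b : bool) :
  ReC (Pmeas r nx nz b 1 1) = (1 - (if b then 1 else -1) * r * nz) / 2.
Proof. rewrite /Pmeas /sigma_x /sigma_z !mxE !eqxx ?e01 ?e10; simpc; by rewrite /= mulrC. Qed.

Lemma Pmeas01 (r nx nz : R) (b : bool) :
  ReC (Pmeas r nx nz b 0 1 + Pmeas r nx nz b 1 0) = (if b then 1 else -1) * r * nx.
Proof.
have h : (2^-1 + 2^-1 : R) = 1 by lra.
rewrite /Pmeas /sigma_x /sigma_z !mxE ?e01 ?e10; simpc; by rewrite /= -mulrDl h mul1r.
Qed.

Lemma comb_entry n (c : 'I_n -> R) (P : 'I_n -> qop R) (j k : 'I_2) :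
  ReC ((\sum_(i < n) (c i)%:C *: P i) j k) = \sum_(i < n) c i * ReC (P i j k).
Proof.
rewrite summxE raddf_sum; apply: eq_bigr => i _; rewrite mxE; exact: ReCM.
Qed.

Lemma quad (M : qop R) (s t : R) :
  let v : 'cV[R[i]]_2 := \col_(i < 2) (if i == 0 :> 'I_2 then s%:C else t%:C) in
  ReC (((map_mx conjc v)^T *m M *m v) 0 0) =
    s ^+ 2 * ReC (M 0 0) + s * t * ReC (M 0 1 + M 1 0) + t ^+ 2 * ReC (M 1 1).
Proof.
move=> v; rewrite !mxE !big_ord_recr !big_ord0 /= !mxE !big_ord_recr !big_ord0 /= !mxE /=.
have -> : widen_ord (m:=2) (leqnSn 1) ord_max = 0 :> 'I_2 by apply/val_inj.
have -> : (ord_max : 'I_2) = 1 by apply/val_inj.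
move: (M 0 0) (M 0 1) (M 1 0) (M 1 1) => [a1 b1] [a2 b2] [a3 b3] [a4 b4].
simpc; rewrite /=; ring.
Qed.
Lemma comb_entry2 n (c : 'I_n -> R) (P : 'I_n -> qop R) :
  ReC ((\sum_(i < n) (c i)%:C *: P i) 0 1 + (\sum_(i < n) (c i)%:C *: P i) 1 0) =
  \sum_(i < n) c i * ReC (P i 0 1 + P i 1 0).
Proof.
rewrite raddfD /= !comb_entry -big_split /=; apply: eq_bigr => i _.
by rewrite raddfD /= mulrDr.
Qed.

Lemma psd_facts (M : qop R) : psd M ->
  [/\ 0 <= ReC (M 0 0), 0 <= ReC (M 1 1) &
   Num.sqrt ((ReC (M 0 1 + M 1 0) / 2) ^+ 2 + ((ReC (M 0 0) - ReC (M 1 1)) / 2) ^+ 2)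
     <= (ReC (M 0 0) + ReC (M 1 1)) / 2].
Proof.
move=> hM.
set a := ReC (M 0 0); set d := ReC (M 1 1); set x := ReC (M 0 1 + M 1 0) / 2.
have Q s t : 0 <= s ^+ 2 * a + s * t * (2 * x) + t ^+ 2 * d.
  have := hM (\col_(i < 2) (if i == 0 :> 'I_2 then s%:C else t%:C)).
  rewrite lecE => /andP[_]; rewrite quad /=.
  have -> : 2 * x = ReC (M 0 1 + M 1 0) by rewrite /x; lra.
  by [].
have ha : 0 <= a by have := Q 1 0; lra.
have hd : 0 <= d by have := Q 0 1; lra.
have Q1 := Q x (- a); have Q2 := Q d (- x); have Q3 := Q 1 (- x).
have hx : x ^+ 2 <= a * d.
  case: (ltrP 0 (a + d)) => had.
    rewrite -subr_ge0; apply: contraTT Q1 => /negP; rewrite -ltNge => hneg.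
    suff : a * (a * d - x ^+ 2) + d * (a * d - x ^+ 2) < 0.
      move: Q2; nra.
    nra.
  have a0 : a = 0 by lra.
  have d0 : d = 0 by lra.
  move: Q3; rewrite a0 d0; nra.
split => //.
have hc : 0 <= (a + d) / 2 by lra.
rewrite -(ger0_norm hc) -sqrtr_sqr; apply: ler_wsqrtr; nra.
Qed.
End Quantum.

Arguments cn {R}.
Arguments geo {R}.
Arguments psd_facts {R}.
Arguments comb_entry {R}.
Arguments comb_entry2 {R}.
Arguments Pmeas00 {R}.
Arguments Pmeas11 {R}.
Arguments Pmeas01 {R}.

Lemma sim_bound (R : realType) (n : nat) (r : R) : (2 <= n)%N ->
  simulates_Pp n r -> r <= cn n.
Proof.
move=> hn [Pi [[hpsd hsum] hsim]].
pose a i := complex.Re (Pi i 0 0).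
pose d i := complex.Re (Pi i 1 1).
pose x i := complex.Re (Pi i 0 1 + Pi i 1 0) / 2.
pose z i := (a i - d i) / 2.
have [nx [nz [hn1 hgeo]]] := geo n x z hn.
have [p [hp0 [hp1 hpeq]]] := hsim nx nz hn1.
have E00 b : (1 + (if b then 1 else -1) * r * nz) / 2 = \sum_(i < n) p b i * a i.
  by have := congr1 (fun M : qop R => complex.Re (M 0 0)) (hpeq b); rewrite /= Pmeas00 comb_entry.
have E11 b : (1 - (if b then 1 else -1) * r * nz) / 2 = \sum_(i < n) p b i * d i.
  by have := congr1 (fun M : qop R => complex.Re (M 1 1)) (hpeq b); rewrite /= Pmeas11 comb_entry.
have E01 b : (if b then 1 else -1) * r * nx = \sum_(i < n) p b i * (2 * x i).
  have := congr1 (fun M : qop R => complex.Re (M 0 1 + M 1 0)) (hpeq b).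
  rewrite /= Pmeas01 comb_entry2 => ->; apply: eq_bigr => i _.
  by rewrite /x; congr (_ * _); lra.
have K1 : r * nz = \sum_(i < n) (p true i - p false i) * z i.
  have -> : \sum_(i < n) (p true i - p false i) * z i =
     ((\sum_(i < n) p true i * a i - \sum_(i < n) p true i * d i) -
      (\sum_(i < n) p false i * a i - \sum_(i < n) p false i * d i)) / 2.
    rewrite -!sumrB mulr_suml; apply: eq_bigr => i _; rewrite /z; ring.
  rewrite -!E00 -!E11; set rz := r * nz.
  have -> : 1 * r * nz = rz by rewrite mul1r.
  have -> : -1 * r * nz = - rz by rewrite mulN1r mulNr.
  lra.
have K2 : r * nx = \sum_(i < n) (p true i - p false i) * x i.
  have -> : \sum_(i < n) (p true i - p false i) * x i =
     (\sum_(i < n) p true i * (2 * x i) - \sum_(i < n) p false i * (2 * x i)) / 2.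
    rewrite -!sumrB mulr_suml; by apply: eq_bigr => i _; field.
  rewrite -(E01 true) -(E01 false); set rx := r * nx.
  have -> : 1 * r * nx = rx by rewrite mul1r.
  have -> : -1 * r * nx = - rx by rewrite mulN1r mulNr.
  lra.
have R1 : r = \sum_(i < n) (p true i - p false i) * (nx * x i + nz * z i).
  have -> : \sum_(i < n) (p true i - p false i) * (nx * x i + nz * z i) =
      nx * \sum_(i < n) (p true i - p false i) * x i +
      nz * \sum_(i < n) (p true i - p false i) * z i.
    rewrite !mulr_sumr -big_split.
    by apply: eq_bigr => i _ /=; ring.
  rewrite -K1 -K2.
  transitivity (r * (nx ^+ 2 + nz ^+ 2)); first by rewrite hn1 mulr1.
  ring.
have hsum00 : \sum_(i < n) a i = 1.
  have := congr1 (fun M : qop R => complex.Re (M 0 0)) hsum; rewrite /= summxE raddf_sum.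
  by rewrite mxE /=.
have hsum11 : \sum_(i < n) d i = 1.
  have := congr1 (fun M : qop R => complex.Re (M 1 1)) hsum; rewrite /= summxE raddf_sum.
  by rewrite mxE /=.
rewrite R1.
apply: (@le_trans _ _ (\sum_(i < n) `|nx * x i + nz * z i|)).
  apply: ler_sum => i _.
  have hs : `|p true i - p false i| <= 1.
    have := hp0 true i; have := hp0 false i; have := hp1 i.
    move=> h1 h2 h3; rewrite ler_norml; apply/andP; split; lra.
  apply: le_trans (ler_norm _) _; rewrite normrM.
  by apply: ler_piMl => //.
apply: le_trans hgeo _.
have hS : \sum_(i < n) Num.sqrt (x i ^+ 2 + z i ^+ 2) <= 1.
  apply: (@le_trans _ _ (\sum_(i < n) (a i + d i) / 2)).
    apply: ler_sum => i _; have [_ _ h] := psd_facts (Pi i) (hpsd i); exact: h.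
  by rewrite -mulr_suml big_split /= hsum00 hsum11; lra.
have cn0 := @cn_ge0 R n hn.
by rewrite -[X in _ <= X]mulr1; apply: ler_wpM2l.
Qed.

Theorem proposition4 (R : realType) (n : nat) (hn : (2 <= n)%N) :
  (Rp R n <= ((n%:R)^-1 * (cos (pi / (2 * n%:R)) / sin (pi / (2 * n%:R))))%:E)%E /\
  (n%:R)^-1 * (cos (pi / (2 * n%:R)) / sin (pi / (2 * n%:R))) < 2 / (pi : R).
Proof.
split.
  apply: ge_ereal_sup => _ [r hr <-]; rewrite lee_fin.
  exact: (sim_bound _ _ _ hn hr).
have [a0 api ca sa _] := @cn_facts R n hn.
set a := pi / (2 * n%:R) in a0 api ca sa *.
have hnR : (0 : R) < n%:R by rewrite ltr0n; lia.
have pia : (2 : R) / pi = (n%:R)^-1 * a^-1.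
  have gen (P N : R) : 0 < P -> 0 < N -> 2 / P = N^-1 * (P / (2 * N))^-1.
    by move=> hP hN; field; rewrite !gt_eqF.
  exact: gen (pi_gt0 R) hnR.
rewrite pia ltr_pM2l; last by rewrite invr_gt0.
have ht := @tan_gt_id R a; have : 0 < a < pi / 2 by rewrite a0 api.
move=> /ht h.
rewrite -subr_gt0.
have -> : a^-1 - cos a / sin a = (sin a - a * cos a) / (a * sin a).
  by field; apply/andP; split; rewrite gt_eqF.
apply: divr_gt0; first by rewrite subr_gt0.
exact: mulr_gt0.
Qed.
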